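(* Let $\boldsymbol{m}=(m_1,m_2)\in\mathbb{N}^2$ and $g=\gcd(m_1,m_2)$. (a) $\displaystyle \mathcal{R}^{(\boldsymbol{m})}=\bigcup_{\rho=0}^{2g-1}\boldsymbol{\varrho}^{(\boldsymbol{m})}_{\rho/m_2}\big([0,2\pi)\big)$. (b) $\mathrm{LS}^{(\boldsymbol{m})}=\{\boldsymbol{x}(r,\theta)\in\mathbb{D}:\ T_{m_1}(r)^2=\cos^2(m_2\theta)\in\{0,1\}\}$, where $\boldsymbol{x}(r,\theta)=(r\cos\theta,r\sin\theta)$ with $r\in[0,1]$, $\theta\in\mathbb{R}$.
   Context: $\mathbb{D}=\{x\in\mathbb{R}^2:|x|\le1\}$. $T_n(r)=\cos(n\arccos r)$ is the Chebyshev polynomial of degree $n$, and $H_{m_2}(x_1,x_2)=\sum_{k=0}^{\lfloor m_2/2\rfloor}\binom{m_2}{2k}(-1)^kx_1^{m_2-2k}x_2^{2k}$ (so that $H_{m_2}(\cos\theta,\sin\theta)=\cos(m_2\theta)$). The rhodonea variety is $\mathcal{R}^{(\boldsymbol{m})}=\{x\in\mathbb{D}:\ (x_1^2+x_2^2)^{m_2}T_{m_1}(\sqrt{x_1^2+x_2^2})^2=H_{m_2}(x_1,x_2)^2\}$, equivalently, in polar coordinates, $\{\boldsymbol{x}(r,\theta)\in\mathbb{D}: T_{m_1}(r)^2=\cos^2(m_2\theta)\}$. Rhodonea curve: $\boldsymbol{\varrho}^{(\boldsymbol{m})}_\alpha(t)=\big(\cos(m_2t)\cos(m_1t-\alpha\pi),\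 \cos(m_2t)\sin(m_1t-\alpha\pi)\big)$. Nodal index set $\mathrm{I}^{(\boldsymbol{m})}=\{(i_1,i_2)\in\mathbb{Z}^2:\ 0\le i_1\le m_1,\ -2m_2<i_2\le 2m_2,\ i_2\le0\text{ if }i_1=m_1,\ i_1+i_2\text{ even}\}$; rhodonea nodes $\mathrm{LS}^{(\boldsymbol{m})}=\{(r_{i_1}\cos\theta_{i_2},r_{i_1}\sin\theta_{i_2}):\boldsymbol{i}\in\mathrm{I}^{(\boldsymbol{m})}\}$ with $r_{i_1}=\cos\!\big(\frac{i_1\pi}{2m_1}\big)$, $\theta_{i_2}=\frac{i_2\pi}{2m_2}$. *)

(* Defs.v *)
From Stdlib Require Import Reals Lra Lia ZArith Arith.
Open Scope R_scope.

Definition pt := (R * R)%type.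

Definition in_disk (x : pt) : Prop := (fst x)^2 + (snd x)^2 <= 1.

(* Chebyshev polynomial T_n(r) = cos(n arccos r) (used for r in [0,1]) *)
Definition chebT (n : nat) (r : R) : R := cos (INR n * acos r).

Definition Hpoly (m2 : nat) (x1 x2 : R) : R :=
  sum_f_R0 (fun k => C m2 (2 * k) * (-1)^k * x1^(m2 - 2 * k) * x2^(2 * k))
           (Nat.div2 m2).

Definition rhodonea_variety (m1 m2 : nat) (x : pt) : Prop :=
  in_disk x /\
  ((fst x)^2 + (snd x)^2)^m2 * (chebT m1 (sqrt ((fst x)^2 + (snd x)^2)))^2
    = (Hpoly m2 (fst x) (snd x))^2.

Definition rhodonea_curve (m1 m2 : nat) (alpha t : R) : pt :=
  (cos (INR m2 * t) * cos (INR m1 * t - alpha * PI),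
   cos (INR m2 * t) * sin (INR m1 * t - alpha * PI)).

Definition nodal_index (m1 m2 : nat) (i1 i2 : Z) : Prop :=
  (0 <= i1 <= Z.of_nat m1)%Z /\
  (- 2 * Z.of_nat m2 < i2 <= 2 * Z.of_nat m2)%Z /\
  (i1 = Z.of_nat m1 -> (i2 <= 0)%Z) /\
  Z.Even (i1 + i2).

Definition node_r (m1 : nat) (i1 : Z) : R := cos (IZR i1 * PI / (2 * INR m1)).
Definition node_theta (m2 : nat) (i2 : Z) : R := IZR i2 * PI / (2 * INR m2).

Definition rhodonea_nodes (m1 m2 : nat) (x : pt) : Prop :=
  exists i1 i2 : Z, nodal_index m1 m2 i1 i2 /\
    x = (node_r m1 i1 * cos (node_theta m2 i2), node_r m1 i1 * sin (node_theta m2 i2)).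

Definition polar (r theta : R) : pt := (r * cos theta, r * sin theta).

(* Main.v *)
Require Import Defs.
From Stdlib Require Import Reals Lra Lia ZArith Arith.
Open Scope R_scope.

Lemma cos_sq_diff A B : cos A ^ 2 - cos B ^ 2 = sin (A + B) * sin (B - A).
Proof.
  rewrite sin_plus, sin_minus.
  pose proof (sin2_cos2 A) as HA. pose proof (sin2_cos2 B) as HB.
  unfold Rsqr in *.
  replace ((sin A * cos B + cos A * sin B) * (sin B * cos A - cos B * sin A))
    with (cos A * cos A * (sin B * sin B) - (sin A * sin A) * (cos B * cos B)) by ring.
  assert (E1 : sin A * sin A = 1 - cos A * cos A) by lra.
  assert (E2 : sin B * sin B = 1 - cos B * cos B) by lra.
  rewrite E1, E2. ring.
Qed.

Lemma cos_sq_eq A B : cos A ^ 2 = cos B ^ 2 ->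
  exists k : Z, A = B + IZR k * PI \/ A = - B + IZR k * PI.
Proof.
  intro H. assert (H0 : sin (A + B) * sin (B - A) = 0) by (rewrite <- cos_sq_diff; lra).
  destruct (Rmult_integral _ _ H0) as [H1|H1].
  - destruct (sin_eq_0_0 _ H1) as [k Hk]. exists k. right. lra.
  - destruct (sin_eq_0_0 _ H1) as [k Hk]. exists (- k)%Z. left.
    rewrite opp_IZR. lra.
Qed.

Lemma cos_sq_shift x k : cos (x + IZR k * PI) ^ 2 = cos x ^ 2.
Proof.
  apply Rminus_diag_uniq. rewrite cos_sq_diff.
  replace (x - (x + IZR k * PI)) with (IZR (- k) * PI) by (rewrite opp_IZR; ring).
  rewrite (sin_eq_0_1 (IZR (-k) * PI)) by (exists (-k)%Z; reflexivity). ring.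
Qed.

Lemma cos_sq_neg x : cos (- x) ^ 2 = cos x ^ 2.
Proof. rewrite cos_neg. reflexivity. Qed.

Lemma cos_sq_pm A B k : (A = B + IZR k * PI \/ A = - B + IZR k * PI) -> cos A ^ 2 = cos B ^ 2.
Proof.
  intros [H|H]; subst A. apply cos_sq_shift. rewrite cos_sq_shift. apply cos_sq_neg.
Qed.

Lemma cos_sq_mul n A B k : (A = B + IZR k * PI \/ A = - B + IZR k * PI) ->
  cos (INR n * A) ^ 2 = cos (INR n * B) ^ 2.
Proof.
  intros H. apply (cos_sq_pm _ _ (Z.of_nat n * k)).
  rewrite mult_IZR, <- INR_IZR_INZ.
  destruct H as [H|H]; [left|right]; rewrite H; ring.
Qed.

Lemma cos_Zper x n : cos (x + 2 * IZR n * PI) = cos x.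
Proof.
  destruct (Z.le_ge_cases 0 n) as [H|H].
  - destruct (Z_of_nat_complete _ H) as [k ->]. rewrite <- INR_IZR_INZ. apply cos_period.
  - assert (H' : (0 <= - n)%Z) by lia.
    destruct (Z_of_nat_complete _ H') as [k Hk].
    replace n with (- Z.of_nat k)%Z by lia.
    rewrite opp_IZR, <- INR_IZR_INZ.
    rewrite <- (cos_period (x + 2 * - INR k * PI) k). f_equal. ring.
Qed.

Lemma sin_Zper x n : sin (x + 2 * IZR n * PI) = sin x.
Proof.
  destruct (Z.le_ge_cases 0 n) as [H|H].
  - destruct (Z_of_nat_complete _ H) as [k ->]. rewrite <- INR_IZR_INZ. apply sin_period.
  - assert (H' : (0 <= - n)%Z) by lia.
    destruct (Z_of_nat_complete _ H') as [k Hk].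
    replace n with (- Z.of_nat k)%Z by lia.
    rewrite opp_IZR, <- INR_IZR_INZ.
    rewrite <- (sin_period (x + 2 * - INR k * PI) k). f_equal. ring.
Qed.

Lemma shift_pair a b j :
  cos (a + IZR j * PI) * cos (b - IZR j * PI) = cos a * cos b /\
  cos (a + IZR j * PI) * sin (b - IZR j * PI) = cos a * sin b.
Proof.
  destruct (Z.Even_or_Odd j) as [[q Hq]|[q Hq]]; subst j.
  - rewrite mult_IZR.
    replace (a + 2 * IZR q * PI) with (a + 2 * IZR q * PI) by ring.
    replace (b - IZR 2 * IZR q * PI) with (b + 2 * IZR (- q) * PI) by (rewrite opp_IZR; ring).
    replace (a + IZR 2 * IZR q * PI) with (a + 2 * IZR q * PI) by ring.
    rewrite cos_Zper, cos_Zper, sin_Zper. split; reflexivity.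
  - rewrite plus_IZR, mult_IZR.
    replace (a + (IZR 2 * IZR q + 1) * PI) with ((a + PI) + 2 * IZR q * PI) by ring.
    replace (b - (IZR 2 * IZR q + 1) * PI) with ((b + - PI) + 2 * IZR (- q) * PI) by (rewrite opp_IZR; ring).
    rewrite cos_Zper, cos_Zper, sin_Zper.
    rewrite neg_cos. rewrite cos_plus, sin_plus, cos_neg, sin_neg, cos_PI, sin_PI.
    split; ring.
Qed.
Definition Fs (m : nat) (a : R) (u : nat -> R) : R :=
  sum_f_R0 (fun j => C m j * a ^ (m - j) * u j) m.

Lemma C_n0 n : C n 0 = 1.
Proof. unfold C. rewrite Nat.sub_0_r. simpl. field. apply INR_fact_neq_0. Qed.
Lemma C_nn n : C n n = 1.
Proof. unfold C. rewrite Nat.sub_diag. simpl. field. apply INR_fact_neq_0. Qed.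

Lemma Fs_rec m a u : Fs (S m) a u = a * Fs m a u + Fs m a (fun j => u (S j)).
Proof.
  destruct m as [|p].
  - unfold Fs. simpl. rewrite !C_n0, C_nn. ring.
  - unfold Fs.
    rewrite decomp_sum by lia. simpl Nat.pred.
    rewrite (decomp_sum (fun j => C (S p) j * a ^ (S p - j) * u j) (S p)) by lia. simpl Nat.pred.
    change (sum_f_R0 (fun i : nat => C (S (S p)) (S i) * a ^ (S (S p) - S i) * u (S i)) (S p))
      with (sum_f_R0 (fun i : nat => C (S (S p)) (S i) * a ^ (S (S p) - S i) * u (S i)) p
            + C (S (S p)) (S (S p)) * a ^ (S (S p) - S (S p)) * u (S (S p))).
    change (sum_f_R0 (fun j : nat => C (S p) j * a ^ (S p - j) * u (S j)) (S p))
      with (sum_f_R0 (fun j : nat => C (S p) j * a ^ (S p - j) * u (S j)) p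
            + C (S p) (S p) * a ^ (S p - S p) * u (S (S p))).
    rewrite (sum_eq (fun i : nat => C (S (S p)) (S i) * a ^ (S (S p) - S i) * u (S i))
                    (fun i => C (S p) i * a ^ (S p - i) * u (S i) + C (S p) (S i) * a ^ (S p - i) * u (S i))).
    2:{ intros i Hi. rewrite <- pascal by lia.
        replace (S (S p) - S i)%nat with (S p - i)%nat by lia. ring. }
    rewrite plus_sum.
    rewrite Rmult_plus_distr_l.
    rewrite scal_sum.
    rewrite (sum_eq (fun i : nat => C (S p) (S i) * a ^ (S p - S i) * u (S i) * a)
                    (fun i => C (S p) (S i) * a ^ (S p - i) * u (S i))).
    2:{ intros i Hi. replace (S p - i)%nat with (S (S p - S i)) by lia. simpl. ring. }
    rewrite !C_n0, !C_nn, !Nat.sub_diag, !Nat.sub_0_r. simpl. ring.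
Qed.

Lemma Fs_scal m a u b : Fs m a (fun j => b * u j) = b * Fs m a u.
Proof.
  unfold Fs. rewrite scal_sum. apply sum_eq. intros; ring.
Qed.

Lemma Fs_ext m a u v : (forall j, u j = v j) -> Fs m a u = Fs m a v.
Proof. intros H. unfold Fs. apply sum_eq. intros. rewrite H. ring. Qed.

Lemma Fs_cos m phi psi :
  Fs m (cos phi) (fun j => sin phi ^ j * cos (INR j * PI / 2 + psi)) = cos (INR m * phi + psi).
Proof.
  revert psi. induction m as [|m IH]; intro psi.
  - unfold Fs. simpl. rewrite C_n0. replace (0 * PI / 2 + psi) with psi by field.
    replace (0 * phi + psi) with psi by ring. ring.
  - rewrite Fs_rec. rewrite IH.
    rewrite (Fs_ext _ _ _ (fun j => sin phi * (sin phi ^ j * cos (INR j * PI / 2 + (psi + PI / 2))))).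
    2:{ intro j. rewrite S_INR. simpl pow.
        replace ((INR j + 1) * PI / 2 + psi) with (INR j * PI / 2 + (psi + PI / 2)) by field. ring. }
    rewrite Fs_scal, IH.
    replace (INR m * phi + (psi + PI / 2)) with ((INR m * phi + psi) + PI / 2) by ring.
    rewrite (cos_plus (INR m * phi + psi) (PI / 2)), cos_PI2, sin_PI2.
    rewrite S_INR. replace ((INR m + 1) * phi + psi) with (phi + (INR m * phi + psi)) by ring.
    rewrite (cos_plus phi (INR m * phi + psi)). ring.
Qed.
Lemma even_reindex_aux f : (forall k, f (2 * k + 1)%nat = 0) -> forall n,
  sum_f_R0 f (2 * n) = sum_f_R0 (fun k => f (2 * k)%nat) n /\
  sum_f_R0 f (2 * n + 1) = sum_f_R0 (fun k => f (2 * k)%nat) n.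
Proof.
  intros Hf n. induction n as [|n [IH1 IH2]].
  - pose proof (Hf 0%nat) as H0. simpl in H0 |- *. rewrite H0. split; [reflexivity|ring].
  - assert (E : forall g k, sum_f_R0 g (S k) = sum_f_R0 g k + g (S k)) by reflexivity.
    replace (2 * S n)%nat with (S (2 * n + 1)) by lia.
    replace (S (2 * n + 1) + 1)%nat with (S (S (2 * n + 1))) by lia.
    rewrite !E, IH2.
    replace (S (S (2 * n + 1))) with (2 * (S n) + 1)%nat by lia. rewrite Hf.
    replace (S (2 * n + 1)) with (2 * S n)%nat by lia.
    split; ring.
Qed.

Lemma even_reindex f n : (forall k, f (2 * k + 1)%nat = 0) ->
  sum_f_R0 f n = sum_f_R0 (fun k => f (2 * k)%nat) (Nat.div2 n).
Proof.
  intros Hf. destruct (Nat.Even_or_Odd n) as [[q ->]|[q ->]].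
  - rewrite Nat.div2_double. apply (even_reindex_aux f Hf q).
  - replace (2 * q + 1)%nat with (S (2 * q)) by lia. rewrite Nat.div2_succ_double.
    replace (S (2 * q)) with (2 * q + 1)%nat by lia. apply (even_reindex_aux f Hf q).
Qed.

Lemma cos_even k : cos (INR (2 * k) * PI / 2) = (-1) ^ k.
Proof.
  induction k as [|k IH].
  - simpl. replace (0 * PI / 2) with 0 by field. apply cos_0.
  - replace (INR (2 * S k) * PI / 2) with (INR (2 * k) * PI / 2 + PI)
      by (replace (2 * S k)%nat with (2 * k + 2)%nat by lia; rewrite plus_INR; simpl; field).
    rewrite neg_cos, IH. simpl. ring.
Qed.

Lemma cos_odd k : cos (INR (2 * k + 1) * PI / 2) = 0.
Proof.
  apply cos_eq_0_1. exists (Z.of_nat k). rewrite <- INR_IZR_INZ.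
  rewrite plus_INR, mult_INR. simpl. field.
Qed.

Lemma Hpoly_polar m c phi : Hpoly m (c * cos phi) (c * sin phi) = c ^ m * cos (INR m * phi).
Proof.
  replace (INR m * phi) with (INR m * phi + 0) by ring.
  rewrite <- Fs_cos. unfold Fs. rewrite scal_sum.
  rewrite (sum_eq _ (fun i => C m i * cos phi ^ (m-i) * (sin phi ^ i * cos (INR i * PI/2)) * c^m))
    by (intros; rewrite Rplus_0_r; reflexivity).
  rewrite even_reindex.
  2:{ intro k. rewrite cos_odd. ring. }
  unfold Hpoly. apply sum_eq. intros i Hi.
  assert (Hle : (2 * i <= m)%nat).
  { pose proof (Nat.div2_odd m). destruct (Nat.odd m); simpl in *; lia. }
  rewrite cos_even.
  rewrite !Rpow_mult_distr.
  replace (c ^ m) with (c ^ (m - 2 * i) * c ^ (2 * i)) by (rewrite <- pow_add; f_equal; lia).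
  ring.
Qed.

Lemma sq_polar c phi : (c * cos phi) ^ 2 + (c * sin phi) ^ 2 = c ^ 2.
Proof.
  pose proof (sin2_cos2 phi) as H. unfold Rsqr in H.
  replace ((c * cos phi) ^ 2 + (c * sin phi) ^ 2) with (c ^ 2 * (sin phi * sin phi + cos phi * cos phi)) by ring.
  rewrite H. ring.
Qed.

Lemma variety_polar m1 m2 c phi :
  rhodonea_variety m1 m2 (c * cos phi, c * sin phi) <->
  c ^ 2 <= 1 /\ (c ^ m2) ^ 2 * chebT m1 (Rabs c) ^ 2 = (c ^ m2) ^ 2 * cos (INR m2 * phi) ^ 2.
Proof.
  unfold rhodonea_variety, in_disk. simpl fst. simpl snd.
  rewrite sq_polar, Hpoly_polar.
  assert (E1 : sqrt (c ^ 2) = Rabs c) by (rewrite <- sqrt_Rsqr_abs; unfold Rsqr; f_equal; ring).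
  assert (E2 : (c ^ 2) ^ m2 = (c ^ m2) ^ 2) by (rewrite <- !pow_mult; f_equal; lia).
  rewrite E1, E2, Rpow_mult_distr. tauto.
Qed.

Lemma polar_ex x1 x2 : exists c phi, 0 <= c /\ x1 = c * cos phi /\ x2 = c * sin phi.
Proof.
  set (r := sqrt (x1 ^ 2 + x2 ^ 2)).
  assert (Hr2 : r * r = x1 ^ 2 + x2 ^ 2) by (apply sqrt_sqrt; nra).
  assert (Hr0 : 0 <= r) by apply sqrt_pos.
  destruct (Req_dec r 0) as [Hz|Hnz].
  - exists 0, 0. rewrite Hz in Hr2. split; [lra|]. split; nra.
  - assert (Hrp : 0 < r) by lra.
    set (u := x1 / r).
    assert (Hu : x1 = r * u) by (unfold u; field; lra).
    assert (Hx1 : r * r * (u * u) = x1 * x1) by (rewrite Hu; ring).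
    assert (Hr2p : 0 < r * r) by nra.
    assert (Huu : u * u <= 1).
    { apply (Rmult_le_reg_l (r * r)); [exact Hr2p|]. rewrite Hx1. nra. }
    assert (Hu1 : -1 <= u <= 1) by nra.
    set (p := acos u).
    assert (Hc : cos p = u) by (apply cos_acos; exact Hu1).
    assert (Hs0 : 0 <= sin p) by (apply sin_ge_0; apply acos_bound).
    assert (Hs2 : (r * sin p) * (r * sin p) = x2 * x2).
    { pose proof (sin2_cos2 p) as H. unfold Rsqr in H. rewrite Hc in H.
      replace ((r * sin p) * (r * sin p)) with (r * r * (sin p * sin p)) by ring.
      replace (sin p * sin p) with (1 - u * u) by lra.
      replace (r * r * (1 - u * u)) with (r * r - r * r * (u * u)) by ring.
      rewrite Hx1, Hr2. ring. }
    exists r.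
    destruct (Rle_lt_dec 0 x2) as [H2|H2].
    + exists p. split; [exact Hr0|]. split; [rewrite Hc; exact Hu|].
      assert (0 <= r * sin p) by (apply Rmult_le_pos; assumption).
      nra.
    + exists (- p). split; [exact Hr0|]. rewrite cos_neg, sin_neg.
      split; [rewrite Hc; exact Hu|].
      assert (0 <= r * sin p) by (apply Rmult_le_pos; assumption).
      nra.
Qed.

Lemma reduce_2pi t0 : exists p : Z, 0 <= t0 + 2 * IZR p * PI < 2 * PI.
Proof.
  pose proof PI_RGT_0 as HPI.
  set (y := t0 / (2 * PI)).
  destruct (archimed y) as [H1 H2].
  exists (- (up y - 1))%Z.
  rewrite opp_IZR, minus_IZR.
  assert (Ht : t0 = 2 * PI * y) by (unfold y; field; lra).
  replace (t0 + 2 * - (IZR (up y) - 1) * PI) with (2 * PI * (y - IZR (up y) + 1)) by (rewrite Ht; ring).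
  split.
  - apply Rmult_le_pos; lra.
  - replace (2 * PI) with (2 * PI * 1) at 2 by ring. apply Rmult_lt_compat_l; lra.
Qed.

Lemma curve_periodic m1 m2 alpha t p :
  rhodonea_curve m1 m2 alpha (t + 2 * IZR p * PI) = rhodonea_curve m1 m2 alpha t.
Proof.
  unfold rhodonea_curve.
  replace (INR m2 * (t + 2 * IZR p * PI)) with (INR m2 * t + 2 * IZR (Z.of_nat m2 * p) * PI)
    by (rewrite mult_IZR, <- INR_IZR_INZ; ring).
  replace (INR m1 * (t + 2 * IZR p * PI) - alpha * PI) with (INR m1 * t - alpha * PI + 2 * IZR (Z.of_nat m1 * p) * PI)
    by (rewrite mult_IZR, <- INR_IZR_INZ; ring).
  rewrite cos_Zper, cos_Zper, sin_Zper. reflexivity.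
Qed.

Lemma construct m1 m2 (Hm1 : (1 <= m1)%nat) (Hm2 : (1 <= m2)%nat) c s phi sg K :
  cos s = c -> (sg = 1 \/ sg = -1) ->
  INR m2 * phi = sg * INR m1 * s + IZR K * PI ->
  exists rho : nat, (rho < 2 * Nat.gcd m1 m2)%nat /\
    exists t : R, 0 <= t < 2 * PI /\
      (c * cos phi, c * sin phi) = rhodonea_curve m1 m2 (INR rho / INR m2) t.
Proof.
  intros Hc Hsg Hphi.
  set (g := Nat.gcd m1 m2).
  assert (Hg : (1 <= g)%nat).
  { destruct g eqn:E; [|lia]. apply Nat.gcd_eq_0 in E. lia. }
  destruct (Nat.gcd_bezout_pos m1 m2 ltac:(lia)) as [a [b Hab]].
  fold g in Hab.
  set (G := (2 * Z.of_nat g)%Z).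
  assert (HG : (0 < G)%Z) by (unfold G; lia).
  set (rz := ((- K) mod G)%Z). set (q := ((- K) / G)%Z).
  assert (Hdm : (- K = G * q + rz)%Z) by (apply Z.div_mod; lia).
  assert (Hrz : (0 <= rz < G)%Z) by (apply Z.mod_pos_bound; exact HG).
  set (j := (- 2 * Z.of_nat a * q)%Z).
  set (n := (- (Z.of_nat a + Z.of_nat b) * q)%Z).
  assert (HabZ : (Z.of_nat a * Z.of_nat m1 = Z.of_nat g + Z.of_nat b * Z.of_nat m2)%Z) by lia.
  assert (Hint : ((Z.of_nat m1 + Z.of_nat m2) * j - 2 * Z.of_nat m2 * n = rz + K)%Z).
  { unfold j, n. unfold G in Hdm. nia. }
  exists (Z.to_nat rz). split; [unfold G in Hrz; lia|].
  assert (Hrho : INR (Z.to_nat rz) = IZR rz) by (rewrite INR_IZR_INZ; f_equal; lia).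
  assert (Hm2R : 0 < INR m2) by (apply lt_0_INR; lia).
  set (t0 := (sg * s + IZR j * PI) / INR m2).
  assert (Ht0 : INR m2 * t0 = sg * s + IZR j * PI) by (unfold t0; field; lra).
  assert (Hphi' : INR m1 * t0 - INR (Z.to_nat rz) / INR m2 * PI = phi - IZR j * PI + 2 * IZR n * PI).
  { apply (Rmult_eq_reg_l (INR m2)); [|lra].
    replace (INR m2 * (INR m1 * t0 - INR (Z.to_nat rz) / INR m2 * PI))
      with (INR m1 * (INR m2 * t0) - INR (Z.to_nat rz) * PI) by (field; lra).
    rewrite Ht0, Hrho.
    replace (INR m2 * (phi - IZR j * PI + 2 * IZR n * PI))
      with (INR m2 * phi - INR m2 * IZR j * PI + 2 * INR m2 * IZR n * PI) by ring.
    rewrite Hphi.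
    apply (f_equal IZR) in Hint.
    rewrite minus_IZR, !mult_IZR, plus_IZR, <- !INR_IZR_INZ in Hint.
    rewrite plus_IZR in Hint.
    assert (Hint' : ((INR m1 + INR m2) * IZR j - 2 * INR m2 * IZR n) * PI = (IZR rz + IZR K) * PI)
      by (rewrite Hint; reflexivity).
    lra. }
  destruct (reduce_2pi t0) as [p Hp].
  exists (t0 + 2 * IZR p * PI). split; [exact Hp|].
  rewrite curve_periodic. unfold rhodonea_curve.
  rewrite Ht0, Hphi'.
  replace (phi - IZR j * PI + 2 * IZR n * PI) with ((phi - IZR j * PI) + 2 * IZR n * PI) by ring.
  rewrite cos_Zper, sin_Zper.
  destruct (shift_pair (sg * s) phi j) as [E1 E2].
  rewrite E1, E2.
  assert (Hcs : cos (sg * s) = c) by (destruct Hsg as [->| ->]; [rewrite Rmult_1_l | replace (-1 * s) with (- s) by ring; rewrite cos_neg]; exact Hc).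
  rewrite Hcs. reflexivity.
Qed.

Lemma part_a m1 m2 (Hm1 : (1 <= m1)%nat) (Hm2 : (1 <= m2)%nat) (x : pt) :
     rhodonea_variety m1 m2 x <->
     exists rho : nat, (rho < 2 * Nat.gcd m1 m2)%nat /\
       exists t : R, 0 <= t < 2 * PI /\
         x = rhodonea_curve m1 m2 (INR rho / INR m2) t.
Proof.
  pose proof PI_RGT_0 as HPI.
  assert (Hm2R : 1 <= INR m2) by (apply (le_INR 1); exact Hm2).
  split.
  - destruct x as [x1 x2]. intro Hv.
    destruct (polar_ex x1 x2) as [c [phi [Hc0 [-> ->]]]].
    apply variety_polar in Hv. destruct Hv as [Hc1 Heq].
    destruct (Req_dec c 0) as [Hz|Hnz].
    + subst c. exists 0%nat. split.
      { assert (Nat.gcd m1 m2 <> 0%nat) by (intro E; apply Nat.gcd_eq_0 in E; lia). lia. }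
      set (t := PI / (2 * INR m2)).
      assert (Ht : INR m2 * t = PI / 2) by (unfold t; field; lra).
      assert (Ht0 : 0 <= t) by (unfold t; apply Rle_mult_inv_pos; lra).
      exists t. split.
      { split; [exact Ht0|]. nra. }
      unfold rhodonea_curve. rewrite Ht, cos_PI2. f_equal; ring.
    + assert (Hcp : 0 < c) by lra.
      rewrite Rabs_right in Heq by lra.
      assert (Hpw : (c ^ m2) ^ 2 <> 0) by (apply pow_nonzero; apply pow_nonzero; lra).
      apply Rmult_eq_reg_l in Heq; [|exact Hpw].
      assert (Hc11 : -1 <= c <= 1) by nra.
      set (s := acos c).
      assert (Hcs : cos s = c) by (apply cos_acos; exact Hc11).
      unfold chebT in Heq. fold s in Heq.
      destruct (cos_sq_eq _ _ Heq) as [k [Hk|Hk]].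
      * apply (construct m1 m2 Hm1 Hm2 c s phi 1 (- k)); [exact Hcs|left; reflexivity|].
        rewrite opp_IZR. lra.
      * apply (construct m1 m2 Hm1 Hm2 c s phi (-1) k); [exact Hcs|right; reflexivity|].
        lra.
  - intros [rho [Hrho [t [Ht ->]]]].
    unfold rhodonea_curve.
    set (c := cos (INR m2 * t)). set (phi := INR m1 * t - INR rho / INR m2 * PI).
    apply variety_polar. split.
    { pose proof (sin2_cos2 (INR m2 * t)) as H. unfold Rsqr in H. fold c in H.
      assert (0 <= sin (INR m2 * t) * sin (INR m2 * t)) by nra. nra. }
    assert (Key : chebT m1 (Rabs c) ^ 2 = cos (INR m2 * phi) ^ 2).
    { unfold chebT. set (w := acos (Rabs c)).
      assert (Hab : -1 <= Rabs c <= 1).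
      { pose proof (COS_bound (INR m2 * t)) as [H1 H2]. fold c in H1, H2.
        unfold Rabs; destruct (Rcase_abs c); lra. }
      assert (Hw : cos w = Rabs c) by (apply cos_acos; exact Hab).
      assert (Hw2 : cos w ^ 2 = cos (INR m2 * t) ^ 2) by (rewrite Hw; apply pow2_abs).
      destruct (cos_sq_eq _ _ Hw2) as [k Hk].
      rewrite (cos_sq_mul m1 _ _ k Hk).
      unfold phi.
      replace (INR m2 * (INR m1 * t - INR rho / INR m2 * PI))
        with (INR m1 * (INR m2 * t) + IZR (- Z.of_nat rho) * PI)
        by (rewrite opp_IZR, <- INR_IZR_INZ; field; lra).
      rewrite cos_sq_shift. reflexivity. }
    rewrite Key. reflexivity.
Qed.

Lemma node_finish m1 m2 (Hm1 : (1 <= m1)%nat) (Hm2 : (1 <= m2)%nat) r s theta i1 i2' :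
  cos s = r -> 0 <= s <= PI / 2 ->
  INR m1 * s = IZR i1 * PI / 2 -> INR m2 * theta = IZR i2' * PI / 2 ->
  Z.Even (i1 + i2') -> rhodonea_nodes m1 m2 (polar r theta).
Proof.
  intros Hc Hs H1 H2 Hev.
  pose proof PI_RGT_0 as HPI.
  assert (Hm1R : 1 <= INR m1) by (apply (le_INR 1); exact Hm1).
  assert (Hm2R : 1 <= INR m2) by (apply (le_INR 1); exact Hm2).
  assert (Hi1a : 0 <= IZR i1) by nra.
  assert (Hi1b : IZR i1 <= INR m1) by nra.
  rewrite INR_IZR_INZ in Hi1b. apply le_IZR in Hi1a. apply le_IZR in Hi1b.
  assert (Hsr : s = IZR i1 * PI / (2 * INR m1)) by (apply (Rmult_eq_reg_l (INR m1)); [rewrite H1; field|]; lra).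
  assert (Hr : r = node_r m1 i1) by (unfold node_r; rewrite <- Hsr; auto).
  set (N := (4 * Z.of_nat m2)%Z).
  set (Q := ((i2' + 2 * Z.of_nat m2 - 1) / N)%Z).
  set (R0 := ((i2' + 2 * Z.of_nat m2 - 1) mod N)%Z).
  assert (HN : (0 < N)%Z) by (unfold N; lia).
  assert (Hdm : (i2' + 2 * Z.of_nat m2 - 1 = N * Q + R0)%Z) by (apply Z.div_mod; lia).
  assert (HR0 : (0 <= R0 < N)%Z) by (apply Z.mod_pos_bound; exact HN).
  set (i2 := (i2' - N * Q)%Z).
  assert (Htheta : theta = node_theta m2 i2 + 2 * IZR Q * PI).
  { unfold node_theta, i2, N. apply (Rmult_eq_reg_l (INR m2)); [|lra].
    rewrite H2, minus_IZR, !mult_IZR, <- INR_IZR_INZ. field. lra. }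
  unfold polar. rewrite Htheta, cos_Zper, sin_Zper.
  destruct (Z.eq_dec i1 (Z.of_nat m1)) as [Em|Nm].
  - assert (Hr0 : r = 0).
    { rewrite Hr. unfold node_r. rewrite Em, <- INR_IZR_INZ.
      replace (INR m1 * PI / (2 * INR m1)) with (PI / 2) by (field; lra). apply cos_PI2. }
    set (i2f := if Z_lt_le_dec 0 i2 then (i2 - 2 * Z.of_nat m2)%Z else i2).
    exists i1, i2f. split.
    + unfold nodal_index, i2f. destruct (Z_lt_le_dec 0 i2) as [Hp|Hp].
      * destruct Hev as [e He]. unfold i2, N in *.
        split; [lia|]. split; [lia|]. split; [lia|]. exists (e - 2 * Z.of_nat m2 * Q - Z.of_nat m2)%Z. lia.
      * destruct Hev as [e He]. unfold i2, N in *.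
        split; [lia|]. split; [lia|]. split; [lia|]. exists (e - 2 * Z.of_nat m2 * Q)%Z. lia.
    + rewrite <- Hr, Hr0. f_equal; ring.
  - exists i1, i2. split.
    + destruct Hev as [e He]. unfold nodal_index, i2, N in *.
      split; [lia|]. split; [lia|]. split; [lia|]. exists (e - 2 * Z.of_nat m2 * Q)%Z. lia.
    + rewrite Hr. reflexivity.
Qed.

Lemma part_b m1 m2 (Hm1 : (1 <= m1)%nat) (Hm2 : (1 <= m2)%nat) (x : pt) :
     rhodonea_nodes m1 m2 x <->
     exists r theta : R, 0 <= r <= 1 /\ x = polar r theta /\ in_disk x /\
       (chebT m1 r)^2 = (cos (INR m2 * theta))^2 /\
       ((cos (INR m2 * theta))^2 = 0 \/ (cos (INR m2 * theta))^2 = 1).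
Proof.
  pose proof PI_RGT_0 as HPI.
  assert (Hm1R : 1 <= INR m1) by (apply (le_INR 1); exact Hm1).
  assert (Hm2R : 1 <= INR m2) by (apply (le_INR 1); exact Hm2).
  split.
  - intros [i1 [i2 [[Hi1 [Hi2 [Hi3 Hev]]] ->]]].
    set (A := IZR i1 * PI / (2 * INR m1)).
    assert (HA0 : 0 <= IZR i1) by (apply IZR_le; lia).
    assert (HA1 : IZR i1 <= INR m1) by (rewrite INR_IZR_INZ; apply IZR_le; lia).
    assert (HA : 0 <= A <= PI / 2).
    { unfold A. split.
      - apply Rle_mult_inv_pos; nra.
      - apply (Rmult_le_reg_l (2 * INR m1)); [lra|].
        replace (2 * INR m1 * (IZR i1 * PI / (2 * INR m1))) with (IZR i1 * PI) by (field; lra). nra. }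
    assert (Hr0 : 0 <= cos A) by (apply cos_ge_0; lra).
    assert (Hr1 : cos A <= 1) by apply COS_bound.
    exists (cos A), (node_theta m2 i2).
    split; [lra|]. split; [reflexivity|].
    split.
    { unfold in_disk. simpl fst; simpl snd. unfold node_r. fold A. rewrite sq_polar. nra. }
    assert (Hch : chebT m1 (cos A) = cos (IZR i1 * PI / 2)).
    { unfold chebT. rewrite acos_cos by lra. unfold A. f_equal. field. lra. }
    assert (Hth : INR m2 * node_theta m2 i2 = IZR i2 * PI / 2) by (unfold node_theta; field; lra).
    rewrite Hch, Hth. split.
    + destruct Hev as [e He]. apply (cos_sq_pm _ _ e). right.
      assert (IZR i1 = 2 * IZR e - IZR i2) by (rewrite <- mult_IZR, <- minus_IZR; f_equal; lia).
      rewrite H. field.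
    + destruct (Z.Even_or_Odd i2) as [[q Hq]|[q Hq]].
      * right. assert (Hs : sin (IZR i2 * PI / 2) = 0).
        { apply sin_eq_0_1. exists q. rewrite Hq, mult_IZR. field. }
        pose proof (sin2_cos2 (IZR i2 * PI / 2)) as H. unfold Rsqr in H. rewrite Hs in H. lra.
      * left. rewrite (cos_eq_0_1 (IZR i2 * PI / 2)). ring.
        exists q. rewrite Hq, plus_IZR, mult_IZR. field.
  - intros [r [theta [Hr [-> [_ [Heq Hv]]]]]].
    set (s := acos r).
    assert (Hcs : cos s = r) by (apply cos_acos; lra).
    assert (Hs : 0 <= s <= PI / 2).
    { pose proof (acos_bound r) as Hb. fold s in Hb. split; [lra|].
      destruct (Rle_lt_dec s (PI / 2)) as [H|H]; [exact H|].
      assert (cos s < 0) by (apply cos_lt_0; lra). lra. }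
    unfold chebT in Heq. fold s in Heq.
    destruct Hv as [Hv|Hv].
    + assert (Ha : cos (INR m1 * s) = 0) by (rewrite Hv in Heq; nra).
      assert (Hb : cos (INR m2 * theta) = 0) by nra.
      destruct (cos_eq_0_0 _ Ha) as [k1 Hk1]. destruct (cos_eq_0_0 _ Hb) as [k2 Hk2].
      apply (node_finish m1 m2 Hm1 Hm2 r s theta (2 * k1 + 1) (2 * k2 + 1)); auto.
      * rewrite Hk1, plus_IZR, mult_IZR. field.
      * rewrite Hk2, plus_IZR, mult_IZR. field.
      * exists (k1 + k2 + 1)%Z. lia.
    + assert (Ha : sin (INR m1 * s) = 0).
      { pose proof (sin2_cos2 (INR m1 * s)) as H. unfold Rsqr in H. rewrite Hv in Heq. nra. }
      assert (Hb : sin (INR m2 * theta) = 0).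
      { pose proof (sin2_cos2 (INR m2 * theta)) as H. unfold Rsqr in H. nra. }
      destruct (sin_eq_0_0 _ Ha) as [k1 Hk1]. destruct (sin_eq_0_0 _ Hb) as [k2 Hk2].
      apply (node_finish m1 m2 Hm1 Hm2 r s theta (2 * k1) (2 * k2)); auto.
      * rewrite Hk1, mult_IZR. field.
      * rewrite Hk2, mult_IZR. field.
      * exists (k1 + k2)%Z. lia.
Qed.

Theorem theorem4p1 (m1 m2 : nat) (Hm1 : (1 <= m1)%nat) (Hm2 : (1 <= m2)%nat) :
  (* (a) *)
  (forall x : pt,
     rhodonea_variety m1 m2 x <->
     exists rho : nat, (rho < 2 * Nat.gcd m1 m2)%nat /\
       exists t : R, 0 <= t < 2 * PI /\
         x = rhodonea_curve m1 m2 (INR rho / INR m2) t)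
  /\
  (* (b) *)
  (forall x : pt,
     rhodonea_nodes m1 m2 x <->
     exists r theta : R, 0 <= r <= 1 /\ x = polar r theta /\ in_disk x /\
       (chebT m1 r)^2 = (cos (INR m2 * theta))^2 /\
       ((cos (INR m2 * theta))^2 = 0 \/ (cos (INR m2 * theta))^2 = 1)).
Proof.
  split; intro x; [apply part_a | apply part_b]; assumption.
Qed.
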